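(* Let $d\ge 2$, $x\in\mathbb{R}^d$, $n$ a positive integer, and let $\mathcal{P}$ be a Poisson point process of intensity one in $\mathbb{R}^d$. For any $a_0>0$ there exist constants $c,c'>0$ depending only on $a_0$ and $d$ such that for every $a\in(0,a_0]$ with $B(x,a)\subset B(n)$ and every $b>a$ with $B(n)\cap\partial B(x,b)\ne\emptyset$, $$\mathbb{P}\big(\mathcal{P}\text{ does not contain a }B(n)\text{-wall around }B(x,a)\text{ in }B(x,b)\big)\le c\exp(-c'b^d).$$
   Context: $B(x,r)=x+[-r,r]^d$, $B(r)=B(0,r)$; $S(p,r)$ is the closed Euclidean ball of radius $r$ centered at $p$; $d(\cdot,\cdot)$ is Euclidean distance. Definition (wall): for $b>a>0$, $x\in\mathbb{R}^d$ and a cube $K\supset B(x,a)$ with $K\cap\partial B(x,b)\ne\emptyset$, a set $\mathfrak{W}\subset\mathbb{R}^d$ contains a $K$-wall around $B(x,a)$ in $B(x,b)$ if for every $p_1\in\partial B(x,a)$ and every $p_2\in K\cap\partial B(x,b)$ the set $K\cap\mathfrak{W}\cap S(p_1,\tfrac34 d(p_1,p_2))\cap S(p_2,\tfrac34 d(p_1,p_2))\cap(B(x,b)\setminus B(x,a))$ is nonempty. *)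

(* Defs.v *)
From HB Require Import structures.
From mathcomp Require Import all_boot all_order all_algebra.
From mathcomp Require Import all_classical all_reals all_analysis.
Set Implicit Arguments. Unset Strict Implicit. Unset Printing Implicit Defensive.
Import Order.TTheory GRing.Theory Num.Theory numFieldTopology.Exports numFieldNormedType.Exports.
Local Open Scope classical_set_scope.
Local Open Scope ring_scope.
Local Open Scope card_scope.

Section Geometry.
Variables (R : realType) (d : nat).
Local Notation pt := 'rV[R]_d.

Definition edist (p q : pt) : R :=
  Num.sqrt (\sum_(i < d) (p ord0 i - q ord0 i) ^+ 2).

(* B(x,r) = x + [-r,r]^d *)
Definition cube (x : pt) (r : R) : set pt :=
  [set y | forall i : 'I_d, `|y ord0 i - x ord0 i| <= r].

Definition cube_bd (x : pt) (r : R) : set pt :=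
  [set y | cube x r y /\ exists i : 'I_d, `|y ord0 i - x ord0 i| = r].

Definition eball (p : pt) (r : R) : set pt := [set y | edist p y <= r].

Definition contains_wall (W K : set pt) (x : pt) (a b : R) : Prop :=
  forall p1 p2 : pt, cube_bd x a p1 -> K p2 -> cube_bd x b p2 ->
    K `&` W `&` eball p1 (3/4 * edist p1 p2) `&` eball p2 (3/4 * edist p1 p2)
      `&` (cube x b `\` cube x a) !=set0.

Definition box_vol (lo hi : pt) : R :=
  \prod_(i < d) Num.max 0 (hi ord0 i - lo ord0 i).

Definition box (lo hi : pt) : set pt :=
  [set y | forall i : 'I_d, lo ord0 i <= y ord0 i <= hi ord0 i].

(* d-dimensional Lebesgue (outer) measure: infimum of the total volume of
   countable covers by closed boxes; on Borel sets this is Lebesgue measure *)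
Definition leb (A : set pt) : \bar R :=
  ereal_inf [set s | exists lo hi : nat -> pt,
     A `<=` \bigcup_k box (lo k) (hi k) /\
     s = (\sum_(0 <= k <oo) (box_vol (lo k) (hi k))%:E)%E].

Definition borel (A : set pt) : Prop := <<s [set: pt], [set U : set pt | open U] >> A.

Definition bounded_set (A : set pt) : Prop := exists r : R, A `<=` cube 0 r.

End Geometry.

(* Poisson probability mass function with mean r >= 0 (with 0^0 = 1) *)
Definition pois_pmf {R : realType} (r : R) (k : nat) : R :=
  r ^+ k / (k`!)%:R * expR (- r).

(* Pi : Omega -> set R^d is a Poisson point process of intensity one on
   (Omega, P): for every finite family of pairwise disjoint bounded Borel
   sets A_0, ..., A_{m-1}, the counts N(A_i) = #(Pi `&` A_i) are
   (a.s. finite and) independent Poisson random variables with means leb A_i.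
   "N(A) = k" is expressed as (Pi w `&` A) #= `I_k. *)
Definition poisson_pp {R : realType} (d : nat) {dT : measure_display}
    {T : measurableType dT} (P : probability T R) (Pi : T -> set 'rV[R]_d) : Prop :=
  (forall (A : set 'rV[R]_d) (k : nat), borel A -> bounded_set A ->
      measurable [set w | (Pi w `&` A) #= `I_k]) /\
  (forall (m : nat) (A : 'I_m -> set 'rV[R]_d) (k : 'I_m -> nat),
      (forall i, borel (A i)) -> (forall i, bounded_set (A i)) ->
      (forall i j, i != j -> A i `&` A j = set0) ->
      P [set w | forall i, (Pi w `&` A i) #= `I_(k i)] =
        (\prod_(i < m) pois_pmf (fine (leb (A i))) (k i))%:E).

(* Main.v *)
Require Import Defs.
From HB Require Import structures.
From mathcomp Require Import all_boot all_order all_algebra.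
From mathcomp Require Import all_classical all_reals all_analysis.
From mathcomp Require Import ring lra zify.
Import Order.TTheory GRing.Theory Num.Theory numFieldTopology.Exports numFieldNormedType.Exports.
Local Open Scope classical_set_scope.
Local Open Scope ring_scope.
Local Open Scope card_scope.
Lemma sum_ind_itv (N m g : nat) :
  (\sum_(t < N) ((m <= t) && (t < m + g))%N = minn N (m + g) - minn N m)%N.
Proof.
elim: N => [|N IH]; first by rewrite big_ord0 !min0n.
rewrite big_ord_recr /= IH.
have [h1|h1] := boolP (m <= N)%N; have [h2|h2] := boolP (N < m + g)%N => /=; lia.
Qed.

Section Count.
Variable R : realType.

Lemma count1D (N : nat) (c h al be : R) : 0 < h -> al <= be ->
  \sum_(t < N) (nat_of_bool ((al <= c + t%:R * h) && (c + t%:R * h <= be)))%:R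
    <= (be - al) / h + 1.
Proof.
move=> h0 ab.
have Lge0 : 0 <= (be - al) / h by apply: divr_ge0; lra.
pose P := fun t : nat => (t < N)%N && ((al <= c + t%:R * h) && (c + t%:R * h <= be)).
have [ex|nex] := pselect (exists t, P t); last first.
  rewrite big1 ?addr_ge0 // => t _.
  case Ht: (_ && _) => //; exfalso; apply: nex; exists t.
  by rewrite /P ltn_ord Ht.
pose m := ex_minn ex.
have [Pm minm] : P m /\ forall t, P t -> (m <= t)%N.
  by rewrite /m; case: ex_minnP.
move: Pm; rewrite /P => /andP[_ /andP[Hm1 Hm2]].
pose g := (Num.truncn ((be - al) / h)).+1.
apply: (@le_trans _ _ (\sum_(t < N) ((m <= t) && (t < m + g))%N%:R)).
  apply: ler_sum => t _.
  case Ht: (_ && _) => //.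
  have Pt : P t by rewrite /P ltn_ord Ht.
  have mt := minm _ Pt.
  move: Ht => /andP[Ht1 Ht2].
  rewrite mt /=.
  have : (t%:R - m%:R) * h <= be - al :> R by lra.
  move=> H.
  have : t%:R - m%:R <= (be - al) / h :> R by rewrite ler_pdivlMr.
  have := truncn_itv Lge0 => /andP[_ T2] H2.
  have : (t - m)%:R < g%:R :> R by rewrite natrB //; apply: le_lt_trans H2 T2.
  rewrite ltr_nat => H3.
  by have -> : (t < m + g)%N by lia.
rewrite -natr_sum sum_ind_itv.
have : ((minn N (m + g) - minn N m) <= g)%N by lia.
rewrite -(ler_nat R) => H; apply: le_trans H _.
have := truncn_itv Lge0 => /andP[T1 _].
by rewrite /g -addn1 natrD; lra.
Qed.
End Count.
Section Grid.
Variable R : realType.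

Lemma grid_count (d : nat) (s : R) (lo : 'rV[R]_d) (K N : nat) (A L : nat -> 'rV[R]_d) :
  0 < s -> (0 < N)%N -> (forall k i, (k < K)%N -> s / N%:R <= L k ord0 i) ->
  (forall y : 'rV[R]_d, (forall i, lo ord0 i <= y ord0 i <= lo ord0 i + s) ->
     exists2 k, (k < K)%N & forall i, A k ord0 i <= y ord0 i <= A k ord0 i + L k ord0 i) ->
  (s / 2) ^+ d <= \sum_(k < K) \prod_(i < d) L k ord0 i.
Proof.
move=> s0 N0 Lh cov.
set h := s / N%:R.
have N0R : 0 < N%:R :> R by rewrite ltr0n.
have h0 : 0 < h by rewrite /h divr_gt0.
pose F (k : 'I_K) (i : 'I_d) (t : 'I_N) : R := (nat_of_bool ((A k ord0 i <= lo ord0 i + t%:R * h) && (lo ord0 i + t%:R * h <= A k ord0 i + L k ord0 i)))%:R.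
have F0 k i t : 0 <= F k i t by rewrite /F ler0n.
have step1 (j : {ffun 'I_d -> 'I_N}) : 1 <= \sum_(k < K) \prod_(i < d) F k i (j i).
  pose y := \row_(i < d) (lo ord0 i + (j i)%:R * h).
  have [k kK Hk] : exists2 k, (k < K)%N & forall i, A k ord0 i <= y ord0 i <= A k ord0 i + L k ord0 i.
    apply: cov => i; rewrite /y mxE.
    have jN : (j i)%:R <= N%:R :> R by rewrite ler_nat ltnW.
    have : (j i)%:R * h <= s.
      rewrite /h mulrA ler_pdivrMr //.
      nra.
    have : 0 <= (j i)%:R * h by rewrite mulr_ge0 // ltW.
    lra.
  rewrite (bigD1 (Ordinal kK)) //=.
  rewrite big1; last first.
    move=> i _; have := Hk i; rewrite /y mxE /F => ->; by [].
  have : 0 <= \sum_(k0 < K | k0 != Ordinal kK) \prod_(i < d) F k0 i (j i).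
    by apply: sumr_ge0 => k0 _; apply: prodr_ge0.
  lra.
have step2 : (N ^ d)%:R <= \sum_(k < K) \prod_(i < d) (2 / h * L k ord0 i).
  have -> : (N ^ d)%:R = \sum_(j : {ffun 'I_d -> 'I_N}) (1 : R).
    by rewrite sumr_const card_ffun !card_ord.
  apply: (le_trans (ler_sum _ (fun j _ => step1 j))).
  rewrite exchange_big /=.
  apply: ler_sum => k _.
  rewrite -bigA_distr_bigA /=.
  apply: ler_prod => i _; apply/andP; split.
    by apply: sumr_ge0.
  have Lk := Lh k i (ltn_ord k).
  have Lpos : 0 <= L k ord0 i by apply: le_trans Lk; apply: ltW.
  apply: le_trans (@count1D _ N (lo ord0 i) h (A k ord0 i) (A k ord0 i + L k ord0 i) h0 _) _.
    lra.
  have -> : A k ord0 i + L k ord0 i - A k ord0 i = L k ord0 i by ring.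
  have : 1 <= L k ord0 i / h by rewrite ler_pdivlMr // mul1r.
  have -> : 2 / h * L k ord0 i = 2 * (L k ord0 i / h) by rewrite mulrAC -mulrA.
  lra.
move: step2.
have -> : \sum_(k < K) \prod_(i < d) (2 / h * L k ord0 i) = (2 / h) ^+ d * \sum_(k < K) \prod_(i < d) L k ord0 i.
  rewrite mulr_sumr; apply: eq_bigr => k _.
  by rewrite big_split /= prodr_const card_ord.
have e1 : s / 2 * (2 / h) = N%:R.
  rewrite /h; field; rewrite ?gt_eqF //=.
have p0 : 0 < (2 / h) ^+ d by apply: exprn_gt0; rewrite divr_gt0.
rewrite natrX -e1 exprMn mulrC => H.
by rewrite -(ler_pM2l p0).
Qed.
End Grid.
Section Misc.
Variable R : realType.

Lemma prod_add_le (I : Type) (r : seq I) (L : I -> R) (t : R) :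
  (forall i, 0 <= L i) -> 0 <= t <= 1 ->
  \prod_(i <- r) (L i + t) <= \prod_(i <- r) L i + t * (size r)%:R * \prod_(i <- r) (L i + 1).
Proof.
move=> L0 /andP[t0 t1].
elim: r => [|a r IH]; first by rewrite !big_nil /= mulr0 mul0r addr0.
rewrite !big_cons /=.
set X := \prod_(i <- r) (L i + t) in IH *.
set Y := \prod_(i <- r) L i in IH *.
set Z := \prod_(i <- r) (L i + 1) in IH *.
have X0 : 0 <= X by apply: prodr_ge0 => i _; apply: addr_ge0.
have Y0 : 0 <= Y by apply: prodr_ge0 => i _.
have YZ : Y <= Z.
  apply: ler_prod => i _; apply/andP; split => //; have := L0 i; lra.
have La := L0 a.
have nn : 0 <= (size r)%:R :> R by [].
rewrite -natr1.
set n := (size r)%:R in nn IH *.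
have H1 : (L a + t) * X <= (L a + t) * (Y + t * n * Z).
  by apply: ler_wpM2l => //; apply: addr_ge0.
apply: le_trans H1 _.
have Z0 : 0 <= Z by apply: le_trans YZ.
have h1 : t * Y <= t * ((L a + 1) * Z) by apply: ler_wpM2l => //; nra.
have h2 : (L a + t) * (t * n * Z) <= (L a + 1) * (t * n * Z).
  apply: ler_wpM2r; [apply: mulr_ge0 => //; apply: mulr_ge0 | lra] => //.
nra.
Qed.

Lemma geom_le1 (K : nat) : \sum_(k < K) (2 ^+ k.+1 : R)^-1 <= 1.
Proof.
have : \sum_(k < K) (2 ^+ k.+1 : R)^-1 = 1 - (2 ^+ K)^-1.
  elim: K => [|K IH]; first by rewrite big_ord0 expr0 invr1 subrr.
  rewrite big_ord_recr /= IH exprS.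
  have : (2 ^+ K : R) != 0 by rewrite expf_neq0.
  by move=> H; field.
move=> ->.
have : 0 <= (2 ^+ K : R)^-1 by rewrite invr_ge0 exprn_ge0.
lra.
Qed.

Lemma sum_ge_term (K : nat) (F : nat -> R) k : (forall j, 0 <= F j) -> (k < K)%N ->
  F k <= \sum_(j < K) F j.
Proof.
move=> F0 kK.
rewrite (bigD1 (Ordinal kK)) //=.
have : 0 <= \sum_(j < K | j != Ordinal kK) F j by apply: sumr_ge0.
lra.
Qed.

Lemma open_box (d : nat) (a b : 'rV[R]_d) :
  open [set y : 'rV[R]_d | forall i, a ord0 i < y ord0 i < b ord0 i].
Proof.
rewrite openE => y Oy.
rewrite /interior /=.
have := @filter_forall _ _ (fun i (z : 'rV[R]_d) => a ord0 i < z ord0 i < b ord0 i) (nbhs y) _.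
apply => // i.
have C := (@coord_continuous R 1 d ord0 i y). apply: (C [set x : R | a ord0 i < x < b ord0 i]).
apply: open_nbhs_nbhs; split; last exact: Oy.
have -> : [set x : R | a ord0 i < x < b ord0 i] = `]a ord0 i, b ord0 i[%classic.
  by apply/seteqP; split => x /=; rewrite in_itv.
exact: interval_open.
Qed.

Lemma compact_box (d : nat) (a b : 'rV[R]_d) :
  compact [set y : 'rV[R]_d | forall i, a ord0 i <= y ord0 i <= b ord0 i].
Proof.
have -> : [set y : 'rV[R]_d | forall i, a ord0 i <= y ord0 i <= b ord0 i] =
  [set y | forall i, `[a ord0 i, b ord0 i]%classic (y ord0 i)].
  by apply/seteqP; split => x /= H i; have := H i; rewrite /= in_itv.
apply: (@rV_compact R d (fun i => `[a ord0 i, b ord0 i]%classic)) => i. exact: segment_compact.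
Qed.
End Misc.
Section LebLB.
Variable R : realType.

Lemma leb_lb (d : nat) (lo : 'rV[R]_d) (s : R) : (0 < d)%N -> 0 < s ->
  (((s / 4) ^+ d)%:E <= leb [set y : 'rV[R]_d | forall i, (lo ord0 i <= y ord0 i <= lo ord0 i + s)%R])%E.
Proof.
move=> d0 s0.
set Q := [set y : 'rV[R]_d | forall i, lo ord0 i <= y ord0 i <= lo ord0 i + s].
rewrite /leb; apply: le_ereal_inf_tmp => S [lk [hk [cov ->]]].
set e := (s / 4) ^+ d.
have e0 : 0 < e by apply: exprn_gt0; rewrite divr_gt0.
pose l k i := Num.max 0 (hk k ord0 i - lk k ord0 i).
have l0 k i : 0 <= l k i by rewrite /l le_max lexx.
pose P k := \prod_(i < d) (l k i + 1).
have P1 k : 1 <= P k.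
  have : \prod_(i < d) (1 : R) <= P k.
    by rewrite /P; apply: ler_prod => i _; apply/andP; split => //; have := l0 k i; lra.
  by rewrite prodr_const expr1n.
pose t k := Num.min 1 (e / (2 ^+ k.+1 * d%:R * P k)).
have dR : 0 < d%:R :> R by rewrite ltr0n.
have den0 k : 0 < 2 ^+ k.+1 * d%:R * P k.
  apply: mulr_gt0; [apply: mulr_gt0 => //; apply: exprn_gt0 => // | have := P1 k; lra].
have t0 k : 0 < t k by rewrite /t lt_min ltr01 divr_gt0.
have t1 k : t k <= 1 by rewrite /t ge_min lexx.
have tbound k : t k * d%:R * P k <= e / 2 ^+ k.+1.
  have : t k <= e / (2 ^+ k.+1 * d%:R * P k) by rewrite /t ge_min lexx orbT.
  rewrite ler_pdivlMr // => H.
  rewrite ler_pdivlMr ?exprn_gt0 //.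
  by apply: le_trans H; rewrite le_eqVlt; apply/orP; left; apply/eqP; ring.
pose eta k := t k / 2.
have eta0 k : 0 < eta k by rewrite /eta divr_gt0.
pose O k := [set y : 'rV[R]_d | forall i, (\row_j (lk k ord0 j - eta k)) ord0 i < y ord0 i <
                                      (\row_j (lk k ord0 j + l k j + eta k)) ord0 i].
have Oopen k : open (O k) by apply: open_box.
have Qc : compact Q.
  have -> : Q = [set y : 'rV[R]_d | forall i, lo ord0 i <= y ord0 i <= (\row_j (lo ord0 j + s)) ord0 i].
    by apply/seteqP; split => y /= H i; rewrite ?mxE; have := H i; rewrite ?mxE.
  exact: compact_box.
have QO : Q `<=` \bigcup_(k in [set: nat]) O k.
  move=> y Qy; have [k _ Hk] := cov y (Qy).
  exists k => // i; rewrite !mxE.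
  have := Hk i; have := eta0 k.
  have : hk k ord0 i - lk k ord0 i <= l k i by rewrite /l le_max lexx orbT.
  lra.
move: Qc; rewrite compact_cover => /(_ nat [set: nat] O (fun k _ => Oopen k) QO) [D' _ QD'].
pose K := (\max_(k <- finmap.enum_fset D') k).+1.
pose N := (Num.truncn (\sum_(k < K) s / eta k)).+1.
pose A k := \row_(j < d) (lk k ord0 j - eta k).
pose L k := \row_(j < d) (l k j + 2 * eta k).
have Lh : forall k i, (k < K)%N -> s / N%:R <= L k ord0 i.
  move=> k i kK; rewrite /L mxE.
  have Fk := @sum_ge_term R K (fun k => s / eta k) k (fun j => divr_ge0 (ltW s0) (ltW (eta0 j))) kK.
  have S0 : 0 <= \sum_(k < K) s / eta k by apply: sumr_ge0 => j _; apply: divr_ge0; apply: ltW.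
  have := truncn_itv S0 => /andP[_ T2].
  have H : s / eta k <= N%:R by rewrite /N; apply: ltW; apply: le_lt_trans Fk T2.
  have N0 : 0 < N%:R :> R by rewrite ltr0n.
  have : s / N%:R <= eta k.
    by rewrite ler_pdivrMr // mulrC -ler_pdivrMr.
  have := l0 k i; have := eta0 k; lra.
have cov' : forall y : 'rV[R]_d, (forall i, lo ord0 i <= y ord0 i <= lo ord0 i + s) ->
     exists2 k, (k < K)%N & forall i, A k ord0 i <= y ord0 i <= A k ord0 i + L k ord0 i.
  move=> y Qy; have [k Dk Ok] := QD' y Qy.
  exists k.
    rewrite /K ltnS; apply: leq_bigmax_seq => //.
  move=> i; have := Ok i; rewrite /A /L !mxE.
  lra.
have key := @grid_count R d s lo K N A L s0 (ltn0Sn _) Lh cov'.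
pose vol k := box_vol (lk k) (hk k).
have vol0 k : 0 <= vol k by rewrite /vol /box_vol; apply: prodr_ge0 => i _; rewrite le_max lexx.
have step k : \prod_(i < d) L k ord0 i <= vol k + e / 2 ^+ k.+1.
  have -> : \prod_(i < d) L k ord0 i = \prod_(i < d) (l k i + t k).
    by apply: eq_bigr => i _; rewrite /L mxE /eta; congr (_ + _); field.
  have sz : size (index_enum 'I_d) = d.
    by rewrite -(filter_predT (index_enum _)) deprecated_filter_index_enum -cardE card_ord.
  have H := @prod_add_le R _ (index_enum 'I_d) (l k) (t k) (l0 k).
  rewrite sz in H.
  have tt : 0 <= t k <= 1 by rewrite (ltW (t0 k)) t1.
  apply: le_trans (H tt) _.
  have -> : \prod_(i < d) l k i = vol k by [].
  have := tbound k; rewrite /P; lra.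
have sum1 : \sum_(k < K) \prod_(i < d) L k ord0 i <= \sum_(k < K) vol k + e.
  apply: (@le_trans _ _ (\sum_(k < K) (vol k + e / 2 ^+ k.+1))).
    by apply: ler_sum => k _; apply: step.
  rewrite big_split /= lerD2l -mulr_sumr.
  have := @geom_le1 R K.
  move=> G; rewrite -[X in _ <= X]mulr1; apply: ler_wpM2l; [exact: ltW|].
  apply: le_trans G; rewrite le_eqVlt; apply/orP; left; apply/eqP; by apply: eq_bigr.
have two : 2 * e <= (s / 2) ^+ d.
  have -> : s / 2 = 2 * (s / 4) by field.
  rewrite exprMn /e; apply: ler_wpM2r; first by apply: ltW.
  have -> : (2 : R) ^+ d = 2 * 2 ^+ d.-1 by rewrite -exprS prednK.
  rewrite ler_peMr //; apply: exprn_ege1; lra.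
have fin : e <= \sum_(k < K) vol k by lra.
apply: (@le_trans _ _ (\sum_(0 <= k < K) (vol k)%:E)%E).
  by rewrite sumEFin big_mkord lee_fin.
have := @nneseries_lim_ge R (fun k => (vol k)%:E) xpredT 0 K (fun n _ _ => vol0 n). exact.
Qed.
End LebLB.
Section LebUB.
Variable R : realType.

Lemma leb_ub (d : nat) (lo : 'rV[R]_d) (s : R) : (0 < d)%N -> 0 < s ->
  (leb [set y : 'rV[R]_d | forall i, (lo ord0 i <= y ord0 i <= lo ord0 i + s)%R] <= (s ^+ d)%:E)%E.
Proof.
move=> d0 s0.
rewrite /leb; apply: ge_ereal_inf.
pose lk (k : nat) : 'rV[R]_d := if k == 0%N then lo else const_mx 1.
pose hk (k : nat) : 'rV[R]_d := if k == 0%N then \row_i (lo ord0 i + s) else const_mx 0.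
exists (\sum_(0 <= k <oo) (box_vol (lk k) (hk k))%:E)%E.
  exists lk, hk; split => //.
  move=> y Qy; exists 0%N => //= i; rewrite /lk /hk /= mxE; exact: Qy.
have f0 k : (0 <= (box_vol (lk k) (hk k))%:E)%E.
  by rewrite lee_fin /box_vol; apply: prodr_ge0 => i _; rewrite le_max lexx.
rewrite (@nneseries_split R _ 0 1) //.
rewrite (@eseries0 R _ (0 + 1)%N xpredT); last first.
  move=> k k1 _; rewrite /lk /hk.
  have -> : (k == 0%N) = false by apply/negbTE; rewrite -lt0n.
  rewrite /box_vol; apply/eqP; rewrite eqe; apply/eqP.
  rewrite (bigD1 (Ordinal d0)) //= !mxE.
  have -> : Num.max 0 (0 - 1 : R) = 0 by rewrite sub0r; apply/max_idPl; rewrite lerN10.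
  by rewrite mul0r.
rewrite adde0 big_nat1 /lk /hk /= /box_vol lee_fin.
have -> : s ^+ d = \prod_(i < d) s by rewrite prodr_const card_ord.
apply: ler_prod => i _; rewrite !mxE.
have -> : lo ord0 i + s - lo ord0 i = s by ring.
by rewrite le_max lexx /= ge_max lexx ltW.
Qed.

Lemma fine_leb (d : nat) (lo : 'rV[R]_d) (s : R) : (0 < d)%N -> 0 < s ->
  (s / 4) ^+ d <= fine (leb [set y : 'rV[R]_d | forall i, (lo ord0 i <= y ord0 i <= lo ord0 i + s)%R]).
Proof.
move=> d0 s0.
have h1 := @leb_lb R d lo s d0 s0.
have h2 := @leb_ub d lo s d0 s0.
move: h1 h2.
case: (leb _) => [r| |] //=; rewrite ?lee_fin //.
Qed.
End LebUB.
Section Geo1.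
Variable R : realType.

Lemma grid_pick (lo0 s u : R) (M : nat) : 0 < s -> lo0 <= u -> u + 2 * s <= lo0 + M%:R * s ->
  exists k : 'I_M, u <= lo0 + k%:R * s /\ lo0 + k%:R * s + s <= u + 2 * s.
Proof.
move=> s0 lu uM.
have t0 : 0 <= (u - lo0) / s by apply: divr_ge0; lra.
have := truncn_itv t0 => /andP[T1 T2].
set k := (Num.truncn ((u - lo0) / s)).+1.
have e1 : (u - lo0) / s * s = u - lo0 by rewrite -mulrA mulVf ?mulr1 // gt_eqF.
have kR : k%:R = (Num.truncn ((u - lo0) / s))%:R + 1 :> R by rewrite /k -natr1.
have H1 : u <= lo0 + k%:R * s.
  have : (u - lo0) / s * s <= k%:R * s by apply: ler_wpM2r; [apply: ltW| apply: ltW].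
  lra.
have H2 : lo0 + k%:R * s + s <= u + 2 * s.
  have : (Num.truncn ((u - lo0) / s))%:R * s <= (u - lo0) / s * s by apply: ler_wpM2r => //; apply: ltW.
  rewrite kR; nra.
have kM : (k < M)%N.
  have : (k.+1)%:R * s <= M%:R * s by rewrite -natr1; nra.
  by rewrite ler_pM2r // ler_nat.
by exists (Ordinal kM).
Qed.
End Geo1.
Definition cellset {R : realType} {d : nat} (lo : 'rV[R]_d) (s : R) : set 'rV[R]_d :=
  [set y | forall i, (lo ord0 i <= y ord0 i <= lo ord0 i + s)%R].

Section Geo2.
Variable R : realType.

Lemma coord_bound (d : nat) (n : nat) (x : 'rV[R]_d) (a : R) : 0 < a ->
  cube x a `<=` cube 0 n%:R -> forall i, `|x ord0 i| + a <= n%:R.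
Proof.
move=> a0 sub i.
pose y : 'rV[R]_d := \row_j (x ord0 j + (if j == i then (if 0 <= x ord0 i then a else - a) else 0)).
have cy : cube x a y.
  move=> j; rewrite /y mxE.
  case: (j == i); last by rewrite addrC addKr normr0 ltW.
  rewrite addrC addKr; case: (0 <= x ord0 i); rewrite ?normrN gtr0_norm //.
have := sub y cy i; rewrite /y !mxE eqxx subr0.
case: (lerP 0 (x ord0 i)) => hx.
  rewrite ger0_norm ?ger0_norm //; lra.
rewrite (ltr0_norm hx) ltr0_norm; lra.
Qed.

End Geo2.
Section Geo3.
Variable R : realType.

Lemma edist_sym (d : nat) (p q : 'rV[R]_d) : Defs.edist p q = Defs.edist q p.
Proof.
rewrite /Defs.edist; congr Num.sqrt; apply: eq_bigr => i _.
by rewrite -sqrrN opprB.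
Qed.

Lemma eball_aux (d : nat) (p q z : 'rV[R]_d) (r : R) :
  (forall i, `|z ord0 i - (p ord0 i + q ord0 i) / 2| <= r) ->
  20 * d%:R * r ^+ 2 <= \sum_(i < d) (p ord0 i - q ord0 i) ^+ 2 ->
  Defs.edist p z <= 3 / 4 * Defs.edist p q.
Proof.
move=> zr big.
set Dsq := \sum_(i < d) (p ord0 i - q ord0 i) ^+ 2 in big.
have Dsq0 : 0 <= Dsq by apply: sumr_ge0 => i _; apply: sqr_ge0.
have S : \sum_(i < d) (p ord0 i - z ord0 i) ^+ 2 <= 9 / 16 * Dsq.
  apply: (@le_trans _ _ (\sum_(i < d) (5 / 16 * (p ord0 i - q ord0 i) ^+ 2 + 5 * r ^+ 2))).
    apply: ler_sum => i _.
    have := zr i; rewrite ler_norml => /andP[h1 h2].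
    set u := p ord0 i - q ord0 i.
    set del := z ord0 i - (p ord0 i + q ord0 i) / 2 in h1 h2 *.
    have -> : p ord0 i - z ord0 i = u / 2 - del by rewrite /u /del; field.
    have : del ^+ 2 <= r ^+ 2.
      have e : r ^+ 2 - del ^+ 2 = (r - del) * (r + del) by ring.
      have : 0 <= (r - del) * (r + del).
        apply: mulr_ge0; lra.
      lra.
    have := sqr_ge0 (u / 4 + 2 * del).
    move=> H1 H2.
    have e1 : (u / 2 - del) ^+ 2 = u ^+ 2 / 4 - u * del + del ^+ 2 by field.
    have e2 : (u / 4 + 2 * del) ^+ 2 = u ^+ 2 / 16 + u * del + 4 * del ^+ 2 by field.
    rewrite e1; rewrite e2 in H1; lra.
  rewrite big_split /= -mulr_sumr sumr_const card_ord.
  rewrite -/Dsq; rewrite -mulr_natr.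
  nra.
rewrite /Defs.edist.
have -> : 3 / 4 * Num.sqrt Dsq = Num.sqrt (9 / 16 * Dsq).
  rewrite sqrtrM; last lra.
  congr (_ * _).
  have -> : (9 / 16 : R) = (3 / 4) ^+ 2 by field.
  by rewrite sqrtr_sqr ger0_norm.
by rewrite ler_sqrt //; lra.
Qed.

End Geo3.
Section Geo4.
Variable R : realType.

Lemma max3 (A B C : R) : exists u, [/\ A <= u, B <= u, C <= u & (u = A \/ u = B \/ u = C)].
Proof.
case: (lerP A B) => h1; case: (lerP B C) => h2; case: (lerP A C) => h3.
all: first [ exists A; split; [lra|lra|lra|by left]
           | exists B; split; [lra|lra|lra|by right; left]
           | exists C; split; [lra|lra|lra|by right; right] ].
Qed.

Lemma geo (d : nat) (hd : (2 <= d)%N) (n : nat) (x p1 p2 : 'rV[R]_d) (a b : R) :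
  0 < a -> 10 * a < b -> cube x a `<=` cube 0 n%:R ->
  cube_bd x a p1 -> cube 0 n%:R p2 -> cube_bd x b p2 ->
  exists j : {ffun 'I_d -> 'I_(32 * d)},
    cellset (\row_i (x ord0 i - b + (j i)%:R * (b / (16 * d)%:R))) (b / (16 * d)%:R) `<=`
    cube 0 n%:R `&` eball p1 (3/4 * Defs.edist p1 p2) `&` eball p2 (3/4 * Defs.edist p1 p2)
      `&` (cube x b `\` cube x a).
Proof.
move=> a0 ab sub [c1 _] Kp2 [c2 [j0 hj0]].
set D := d%:R : R.
have D2 : 2 <= D by rewrite /D ler_nat.
set s := b / (16 * d)%:R.
have bs : b = 16 * D * s.
  rewrite /s natrM -/D; field; rewrite pnatr_eq0; lia.
have s0 : 0 < s by rewrite /s divr_gt0 // ?ltr0n; [lra | lia].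
have s32 : 32 * s <= b by rewrite bs; nra.
have xb := @coord_bound R d n x a a0 sub.
have K1 i : `|p1 ord0 i - x ord0 i| <= a by apply: c1.
have K2 i : `|p2 ord0 i - x ord0 i| <= b by apply: c2.
have K3 i : `|p2 ord0 i| <= n%:R by have := Kp2 i; rewrite mxE subr0.
have bn : b <= 2 * n%:R.
  have := K3 j0; have := xb j0; rewrite -hj0.
  have := ler_normD (p2 ord0 j0) (- x ord0 j0); rewrite normrN; lra.
pose m i := (p1 ord0 i + p2 ord0 i) / 2.
have pick i : exists k : 'I_(32 * d), forall z, x ord0 i - b + k%:R * s <= z <= x ord0 i - b + k%:R * s + s ->
    [/\ m i - 2 * s <= z <= m i + 2 * s, - n%:R <= z <= n%:R & x ord0 i - b <= z <= x ord0 i + b].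
  have [u [u1 u2 u3 ueq]] := max3 (m i - 2 * s) (- n%:R) (x ord0 i - b).
  have := K1 i; rewrite ler_norml => /andP[k1 k2].
  have := K2 i; rewrite ler_norml => /andP[k3 k4].
  have := K3 i; rewrite ler_norml => /andP[k5 k6].
  have : `|x ord0 i| <= n%:R - a by have := xb i; lra.
  rewrite ler_norml => /andP[k7 k8].
  have mi : m i = (p1 ord0 i + p2 ord0 i) / 2 by [].
  have [k [hk1 hk2]] : exists k : 'I_(32 * d), u <= x ord0 i - b + k%:R * s /\ x ord0 i - b + k%:R * s + s <= u + 2 * s.
    apply: grid_pick => //; first lra.
  exists k => z /andP[z1 z2].
  case: ueq => ueq; [|case: ueq => ueq]; rewrite ueq in hk1 hk2; split; apply/andP; split; lra.
have [f hf] := choice pick.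
have mE i : m i = (p1 ord0 i + p2 ord0 i) / 2 by [].
have hj : p2 ord0 j0 - x ord0 j0 = b \/ p2 ord0 j0 - x ord0 j0 = - b.
  move: hj0; case: (ler0P (p2 ord0 j0 - x ord0 j0)) => h; [right|left]; lra.
have Dsq_lb : 80 * D * s ^+ 2 <= \sum_(i < d) (p1 ord0 i - p2 ord0 i) ^+ 2.
  rewrite (bigD1 j0) //=.
  have : 0 <= \sum_(i < d | i != j0) (p1 ord0 i - p2 ord0 i) ^+ 2.
    by apply: sumr_ge0 => i _; apply: sqr_ge0.
  have := K1 j0; rewrite ler_norml => /andP[q1 q2].
  have e1 : (b - a) ^+ 2 <= (p1 ord0 j0 - p2 ord0 j0) ^+ 2.
    have ba : 0 <= b - a by lra.
    case: hj => hj.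
      have : p1 ord0 j0 - p2 ord0 j0 <= - (b - a) by lra.
      move=> h; have : (b - a) ^+ 2 = (- (b - a)) ^+ 2 by rewrite sqrrN.
      move=> ->; rewrite -[X in X <= _]ger0_norm ?sqr_ge0 // -[X in _ <= X]ger0_norm ?sqr_ge0 //.
      rewrite !normrX lerXn2r ?nnegrE ?normr_ge0 //.
      rewrite normrN (ger0_norm ba) ltr0_norm; lra.
    have : b - a <= p1 ord0 j0 - p2 ord0 j0 by lra.
    move=> h; rewrite lerXn2r ?nnegrE //; lra.
  have e2 : 80 * D * s ^+ 2 <= (b - a) ^+ 2.
    have ha : b - a >= 9 / 10 * b by lra.
    have : (9 / 10 * b) ^+ 2 <= (b - a) ^+ 2 by rewrite lerXn2r ?nnegrE //; lra.
    rewrite bs => H; apply: le_trans H.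
    have s2 : 0 <= s ^+ 2 by apply: sqr_ge0.
    have -> : (9 / 10 * (16 * D * s)) ^+ 2 = (9 / 10 * 16) ^+ 2 * D * D * s ^+ 2 by ring.
    have : 80 * D <= (9 / 10 * 16) ^+ 2 * D * D by nra.
    move=> H; apply: ler_wpM2r => //.
  lra.
exists [ffun i => f i] => z zc.
have zc' i : x ord0 i - b + (f i)%:R * s <= z ord0 i <= x ord0 i - b + (f i)%:R * s + s.
  by have := zc i; rewrite mxE ffunE.
have Z i := hf i _ (zc' i).
have Z1 i : m i - 2 * s <= z ord0 i <= m i + 2 * s by case: (Z i).
have Z2 i : - n%:R <= z ord0 i <= n%:R by case: (Z i).
have Z3 i : x ord0 i - b <= z ord0 i <= x ord0 i + b by case: (Z i).
split; [split; [split|]|split].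
- by move=> i; rewrite mxE subr0 ler_norml.
- apply: (@eball_aux R d p1 p2 z (2 * s)).
    by move=> i; rewrite ler_norml; have := Z1 i; have := mE i; lra.
  apply: (le_trans _ Dsq_lb); rewrite exprMn; lra.
- rewrite edist_sym; apply: (@eball_aux R d p2 p1 z (2 * s)).
    by move=> i; rewrite ler_norml; have := Z1 i; have := mE i; lra.
  have -> : \sum_(i < d) (p2 ord0 i - p1 ord0 i) ^+ 2 = \sum_(i < d) (p1 ord0 i - p2 ord0 i) ^+ 2.
    by apply: eq_bigr => i _; rewrite -sqrrN opprB.
  apply: (le_trans _ Dsq_lb); rewrite exprMn; lra.
- by move=> i; rewrite ler_norml; have := Z3 i; lra.
- move=> ca; have := ca j0; rewrite ler_norml => /andP[q1 q2].
  have := K1 j0; rewrite ler_norml => /andP[q3 q4].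
  have := Z1 j0; rewrite mE => zz.
  have : 2 * s <= b / 16 by lra.
  lra.
Qed.
End Geo4.
Section Prob.
Variable R : realType.

Lemma cell_closed (d : nat) (lo : 'rV[R]_d) (s : R) : closed (cellset lo s).
Proof.
have -> : cellset lo s = \bigcap_(i in [set: 'I_d])
    ((fun y : 'rV[R]_d => y ord0 i) @^-1` `[lo ord0 i, lo ord0 i + s]%classic).
  apply/seteqP; split => y /= H.
    by move=> i _ /=; rewrite in_itv /=; exact: H i.
  by move=> i; have := H i I; rewrite /= in_itv.
apply: closed_bigI => i _.
apply: preimage_closed; last exact: interval_closed.
by move=> y _; apply: (@coord_continuous R 1 d ord0 i).
Qed.

Lemma cell_borel (d : nat) (lo : 'rV[R]_d) (s : R) : Defs.borel (cellset lo s).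
Proof.
rewrite /Defs.borel.
have -> : cellset lo s = [set: 'rV[R]_d] `\` ~` cellset lo s by rewrite setTD setCK.
apply: sigma_algebraCD; apply: sub_gen_smallest.
by rewrite /= openC; apply: cell_closed.
Qed.

Lemma cell_bounded (d : nat) (lo : 'rV[R]_d) (s : R) : Defs.bounded_set (cellset lo s).
Proof.
exists (\sum_(i < d) (`|lo ord0 i| + `|lo ord0 i + s|)) => y yc i.
rewrite mxE subr0.
apply: (@le_trans _ _ (`|lo ord0 i| + `|lo ord0 i + s|)).
  have := yc i => /andP[h1 h2].
  case: (lerP 0 (y ord0 i)) => hy.
    rewrite ger0_norm //; have := ler_norm (lo ord0 i + s); have := normr_ge0 (lo ord0 i); lra.
  rewrite ltr0_norm //.
  have := normr_ge0 (lo ord0 i + s); have := ler_norm (- lo ord0 i); rewrite normrN; lra.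
rewrite (bigD1 i) //=.
have : 0 <= \sum_(j < d | j != i) (`|lo ord0 j| + `|lo ord0 j + s|).
  by apply: sumr_ge0 => j _; apply: addr_ge0.
lra.
Qed.

End Prob.
Section Prob2.
Variable R : realType.

Lemma prob_empty (d : nat) (dT : measure_display) (T : measurableType dT) (P : probability T R)
  (Pi : T -> set 'rV[R]_d) (A : set 'rV[R]_d) :
  poisson_pp P Pi -> Defs.borel A -> Defs.bounded_set A ->
  P [set w | (Pi w `&` A) #= `I_0] = (expR (- fine (leb A)))%:E.
Proof.
move=> [_ PP] hb hbd.
have := PP 1%N (fun _ => A) (fun _ => 0%N) (fun _ => hb) (fun _ => hbd).
have dis : forall i j : 'I_1, i != j -> A `&` A = set0 by move=> i j; rewrite !ord1 eqxx.
move=> /(_ dis) H.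
have -> : [set w | (Pi w `&` A) #= `I_0] = [set w | forall i : 'I_1, (Pi w `&` A) #= `I_0].
  by apply/seteqP; split => w /= h //; apply: h ord0.
rewrite H big_ord1 /pois_pmf expr0 fact0 divr1 mul1r //.
Qed.

Lemma union_bound (dT : measure_display) (T : measurableType dT) (P : probability T R)
  (I : Type) (r : seq I) (F : I -> set T) :
  (forall i, measurable (F i)) ->
  (P (\big[setU/set0]_(i <- r) F i) <= \sum_(i <- r) P (F i))%E.
Proof.
move=> mF; elim: r => [|a r IH]; first by rewrite !big_nil measure0.
rewrite !big_cons.
apply: le_trans (measureU2 _ _ _) _ => //.
  by apply: bigsetU_measurable.
by apply: leeD.
Qed.

End Prob2.
Lemma bigsetU_mem (T I : eqType) (r : seq I) (F : I -> set T) i :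
  i \in r -> F i `<=` \big[setU/set0]_(j <- r) F j.
Proof.
elim: r => [//|a r IH]; rewrite in_cons big_cons => /orP[/eqP ->|ir] y Fy.
  by left.
by right; apply: IH.
Qed.

Theorem lemma7p4 (R : realType) (d : nat) (hd : (2 <= d)%N) (a0 : R) (ha0 : 0 < a0) :
  exists c c' : R, 0 < c /\ 0 < c' /\
  forall (dT : measure_display) (T : measurableType dT) (P : probability T R)
         (Pi : T -> set 'rV[R]_d),
  poisson_pp P Pi ->
  forall (x : 'rV[R]_d) (n : nat), (0 < n)%N ->
  forall a : R, 0 < a -> a <= a0 -> cube x a `<=` cube 0 n%:R ->
  forall b : R, a < b -> cube 0 n%:R `&` cube_bd x b !=set0 ->
  exists E : set T, measurable E /\
    [set w | ~ contains_wall (Pi w) (cube 0 n%:R) x a b] `<=` E /\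
    (P E <= (c * expR (- c' * b ^+ d))%:E)%E.
Proof.
pose M := (32 * d)%N.
pose c' : R := ((64 * d)%:R)^-1 ^+ d.
pose B := 10 * a0.
pose c : R := ((M ^ d)%:R) + expR (c' * B ^+ d).
have d0 : (0 < d)%N by lia.
have c'0 : 0 < c' by apply: exprn_gt0; rewrite invr_gt0 ltr0n; lia.
exists c, c'; split; first by rewrite /c; apply: ltr_pwDr; [exact: expR_gt0 | exact: ler0n].
split => // dT T P Pi PP x n n0 a a0' aa0 sub b ab _.
have b0 : 0 < b by lra.
case: (lerP b B) => hb.
  exists setT; split => //; split => //.
  rewrite probability_setT lee_fin.
  have hbd : b ^+ d <= B ^+ d by rewrite lerXn2r ?nnegrE //; lra.
  apply: (@le_trans _ _ (expR (c' * B ^+ d) * expR (- c' * b ^+ d))).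
    rewrite -expRD.
    have : 0 <= c' * B ^+ d + - c' * b ^+ d.
      have -> : c' * B ^+ d + - c' * b ^+ d = c' * (B ^+ d - b ^+ d) by ring.
      apply: mulr_ge0; [exact: ltW | lra].
    move=> H; have := expR_ge1Dx (c' * B ^+ d + - c' * b ^+ d); lra.
  apply: ler_wpM2r; first exact: ltW (expR_gt0 _).
  by rewrite /c lerDr ler0n.
have ab10 : 10 * a < b by rewrite /B in hb; lra.
set s := b / (16 * d)%:R.
have s0 : 0 < s by rewrite /s divr_gt0 // ltr0n; lia.
pose cellF (j : {ffun 'I_d -> 'I_M}) := cellset (\row_i (x ord0 i - b + (j i)%:R * s)) s.
pose ev (j : {ffun 'I_d -> 'I_M}) := [set w | (Pi w `&` cellF j) #= `I_0].
have evm j : measurable (ev j).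
  by apply: PP.1; [apply: cell_borel | apply: cell_bounded].
exists (\big[setU/set0]_(j : {ffun 'I_d -> 'I_M}) ev j); split.
  by apply: bigsetU_measurable => j _.
split.
  move=> w /= nW; apply: contrapT => nE; apply: nW => p1 p2 h1 h2 h3.
  have [j sj] := @geo R d hd n x p1 p2 a b a0' ab10 sub h1 h2 h3.
  have nev : ~ ev j w.
    by move=> evj; apply: nE; apply: (@bigsetU_mem _ _ _ ev j) => //; apply: mem_index_enum.
  have [z [Pz cz]] : Pi w `&` cellF j !=set0.
    apply/set0P; apply/negP => /eqP h; apply: nev; rewrite /ev /= h II0; exact: card_eq00.
  exists z; have := sj z cz.
  by move=> [[[Kz e1] e2] ann]; split => //; split => //; split => //; split.
apply: (le_trans (@union_bound R dT T P _ (index_enum {ffun 'I_d -> 'I_M}) ev evm)).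
have step j : (P (ev j) <= (expR (- c' * b ^+ d))%:E)%E.
  rewrite /ev prob_empty //; [|apply: cell_borel|apply: cell_bounded].
  rewrite lee_fin ler_expR mulNr lerN2.
  have -> : c' * b ^+ d = (s / 4) ^+ d.
    rewrite /c' -exprMn; congr (_ ^+ _); rewrite /s !natrM; field.
    by rewrite pnatr_eq0; lia.
  exact: fine_leb.
apply: (@le_trans _ _ (\sum_(j <- index_enum {ffun 'I_d -> 'I_M}) (expR (- c' * b ^+ d))%:E)%E).
  by apply: lee_sum => j _; apply: step.
rewrite sumEFin lee_fin sumr_const card_ffun !card_ord -mulr_natl.
apply: ler_wpM2r; first exact: ltW (expR_gt0 _).
by rewrite /c natrX lerDl; apply: ltW; apply: expR_gt0.
Qed.
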